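(* Let $\varepsilon\colon\mathbf 2\to\mathbf 2^2$ be $\varepsilon(x)=(x,x)$ and $\pi\colon\mathbf 2^2\to\mathbf 2$ be $\pi(x,y)=x\vee y$, where $\mathbf 2=\{0,1\}$; these form a commutative triangle $\mathbf 2\xrightarrow{\varepsilon}\mathbf 2^2\xrightarrow{\pi}\mathbf 2$ with $\pi\circ\varepsilon=\mathrm{id}_{\mathbf 2}$, viewed as a diagram indexed by the three-element chain $0<1<2$. There is no lifting of this diagram, with respect to $\operatorname{Con}_c$, by lattices and lattice homomorphisms $K_0\xrightarrow{e}L\xrightarrow{p}K_1$ in which the morphism $f=p\circ e\colon K_0\to K_1$ lifting $\mathrm{id}_{\mathbf 2}$ is an isomorphism.
   Context: $\mathbf 2$ and $\mathbf 2^2$ are regarded as $\{\vee,0\}$-semilattices. $\operatorname{Con}_c$ sends a lattice to its $\{\vee,0\}$-semilattice of compact (finitely generated) congruences and a lattice homomorphism $f\colon K\to L$ to the map sending a compact congruence $\alpha$ of $K$ to the congruence of $L$ generated by $\{(f(x),f(y)):(x,y)\in\alpha\}$. A diagram of lattices lifts a diagram of semilattices of the same shape if its image under $\operatorname{Con}_c$ is naturally isomorphic to it. *)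

(* Defs.v *)
From Stdlib Require List.
From mathcomp Require Import all_boot all_order.
Set Implicit Arguments. Unset Strict Implicit. Unset Printing Implicit Defensive.
Import Order.LTheory.
Local Open Scope order_scope.

Section Con.
Context {d : Order.disp_t} (L : latticeType d).

Definition is_congruence (R : L -> L -> Prop) : Prop :=
  (forall x, R x x) /\
  (forall x y, R x y -> R y x) /\
  (forall x y z, R x y -> R y z -> R x z) /\
  (forall a b c e, R a b -> R c e -> R (a `&` c) (b `&` e)) /\
  (forall a b c e, R a b -> R c e -> R (a `|` c) (b `|` e)).

Definition Cg (S : L -> L -> Prop) : L -> L -> Prop :=
  fun x y => forall R, is_congruence R -> (forall a b, S a b -> R a b) -> R x y.

Definition compact_con (al : L -> L -> Prop) : Prop :=
  exists s : seq (L * L), al = Cg (fun x y => List.In (x, y) s).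

Definition con_join (al be : L -> L -> Prop) : L -> L -> Prop :=
  Cg (fun x y => al x y \/ be x y).
Definition con_zero : L -> L -> Prop := Cg (fun _ _ => False).

(* phi is an isomorphism of {\/,0}-semilattices from Con_c L onto (T, join, zero);
   phi is only relevant on compact congruences *)
Definition conc_iso (T : Type) (join : T -> T -> T) (zero : T)
  (phi : (L -> L -> Prop) -> T) : Prop :=
  (forall a b, compact_con a -> compact_con b -> phi a = phi b -> a = b) /\
  (forall t, exists a, compact_con a /\ phi a = t) /\
  (forall a b, compact_con a -> compact_con b ->
     phi (con_join a b) = join (phi a) (phi b)) /\
  phi con_zero = zero.
End Con.

Definition lattice_hom {d d'} {K : latticeType d} {L : latticeType d'} (f : K -> L) : Prop :=
  (forall x y, f (x `&` y) = f x `&` f y) /\ (forall x y, f (x `|` y) = f x `|` f y).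

Definition conc_map {d d'} {K : latticeType d} {L : latticeType d'} (f : K -> L)
  (al : K -> K -> Prop) : L -> L -> Prop :=
  Cg (fun x y => exists a b, al a b /\ x = f a /\ y = f b).

Definition join2 (a b : bool) : bool := a || b.
Definition join22 (a b : bool * bool) : bool * bool := (a.1 || b.1, a.2 || b.2).
Definition eps (x : bool) : bool * bool := (x, x).
Definition pi2 (x : bool * bool) : bool := x.1 || x.2.

(* K0 -e-> L -p-> K1 lifts 2 -eps-> 2^2 -pi-> 2 (the arrow 0 -> 2 is the
   composite, handled by functoriality) *)
Definition lifts_eps_pi {d0 d d1} {K0 : latticeType d0} {L : latticeType d}
  {K1 : latticeType d1} (e : K0 -> L) (p : L -> K1) : Prop :=
  exists (phi0 : (K0 -> K0 -> Prop) -> bool)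
         (phiL : (L -> L -> Prop) -> bool * bool)
         (phi1 : (K1 -> K1 -> Prop) -> bool),
    conc_iso join2 false phi0 /\
    conc_iso join22 (false, false) phiL /\
    conc_iso join2 false phi1 /\
    (forall al, compact_con al -> phiL (conc_map e al) = eps (phi0 al)) /\
    (forall be, compact_con be -> phi1 (conc_map p be) = pi2 (phiL be)).

(* Main.v *)
Require Import Defs.
From mathcomp Require Import all_boot all_order.
From Stdlib Require Import FunctionalExtensionality PropExtensionality.
Local Open Scope order_scope.

Lemma Cg_cong {d} (L : latticeType d) (S : L -> L -> Prop) : is_congruence (Cg S).
Proof.
split; [|split; [|split; [|split]]].
- by move=> x R [HR _] _; apply HR.
- by move=> x y H R HR HS; have [_ [Hs _]] := HR; apply Hs; apply H.
- by move=> x y z H1 H2 R HR HS; have [_ [_ [Ht _]]] := HR; apply: (Ht _ y); [apply H1|apply H2].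
- by move=> a b c e H1 H2 R HR HS; have [_ [_ [_ [Hm _]]]] := HR; apply Hm; [apply H1|apply H2].
- by move=> a b c e H1 H2 R HR HS; have [_ [_ [_ [_ Hj]]]] := HR; apply Hj; [apply H1|apply H2].
Qed.

Lemma Cg_gen {d} (L : latticeType d) (S : L -> L -> Prop) x y : S x y -> Cg S x y.
Proof. by move=> H R _ HS; apply HS. Qed.

Lemma eq_cong {d} (L : latticeType d) : is_congruence (fun x y : L => x = y).
Proof.
split; [|split; [|split; [|split]]]; try by move=> *; subst.
Qed.

Lemma pull_cong {d d'} (K : latticeType d) (L : latticeType d') (f : K -> L)
  (R : L -> L -> Prop) : lattice_hom f -> is_congruence R ->
  is_congruence (fun a b => R (f a) (f b)).
Proof.
move=> [Hm Hj] [Hr [Hs [Ht [HM HJ]]]].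
split; [|split; [|split; [|split]]].
- by move=> x; apply Hr.
- by move=> x y; apply Hs.
- by move=> x y z; apply Ht.
- by move=> a b c e H1 H2; rewrite !Hm; apply HM.
- by move=> a b c e H1 H2; rewrite !Hj; apply HJ.
Qed.

Lemma con_zero_eq {d} (L : latticeType d) (x y : L) : @con_zero _ L x y <-> x = y.
Proof.
split.
- by move=> H; apply (H _ (eq_cong L)).
- by move=> -> R [Hr _] _; apply Hr.
Qed.

Lemma In_map_inv {A B : Type} (f : A -> B) (s : seq A) y :
  List.In y [seq f x | x <- s] -> exists x, List.In x s /\ y = f x.
Proof.
elim: s => //= x s IH [<-|H]; first by exists x; split; [left|].
by have [z [Hz ->]] := IH H; exists z; split; [right|].
Qed.

Lemma In_map {A B : Type} (f : A -> B) (s : seq A) x :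
  List.In x s -> List.In (f x) [seq f x | x <- s].
Proof. elim: s => //= z s IH [<-|H]; [by left|right; apply: IH H]. Qed.

Theorem theorem8p1 (d0 d d1 : Order.disp_t)
  (K0 : latticeType d0) (L : latticeType d) (K1 : latticeType d1)
  (e : K0 -> L) (p : L -> K1) :
  lattice_hom e -> lattice_hom p -> bijective (p \o e) ->
  ~ lifts_eps_pi e p.
Proof.
move=> He Hp [h Hh1 Hh2] [phi0 [phiL [phi1 [I0 [IL [I1 [Ee Ep]]]]]]].
have czc : forall d (M : latticeType d), compact_con (@con_zero _ M).
  by move=> d' M; exists [::].
have pinj : forall x y, p x = p y -> x = y.
  move=> x y Hxy.
  pose be := Cg (fun u v : L => List.In (u, v) [:: (x, y)]).
  have cbe : compact_con be by exists [:: (x, y)].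
  have H0 : conc_map p be = @con_zero _ K1.
    apply: functional_extensionality => u; apply: functional_extensionality => v.
    apply: propositional_extensionality; rewrite con_zero_eq; split.
    - move=> H; apply (H _ (eq_cong K1)) => a b [a' [b' [Hab [-> ->]]]].
      apply (Hab _ (@pull_cong _ _ _ _ p _ Hp (eq_cong K1))) => //.
      by move=> a0 b0 [[<- <-]|[]].
    - by move=> -> R [Hr _] _; apply Hr.
  have := Ep _ cbe; rewrite H0.
  have [_ [_ [_ z1]]] := I1; rewrite z1.
  have [injL [_ [_ zL]]] := IL.
  case E: (phiL be) => [b1 b2] /= H1.
  have [Hb1 Hb2] : b1 = false /\ b2 = false by case: b1 b2 H1 {E} => [] [].
  rewrite Hb1 Hb2 -zL in E.
  have := injL _ _ cbe (czc _ _) E => Hz.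
  have : be x y by apply Cg_gen; left.
  by rewrite Hz con_zero_eq.
have eK : forall u, e (h (p u)) = u by move=> u; apply pinj; apply (Hh2 (p u)).
have [_ [surL _]] := IL.
have [be [[s ->] Hbe]] := surL (true, false).
pose al := Cg (fun a b : K0 => List.In (a, b) [seq (h (p pr.1), h (p pr.2)) | pr <- s]).
have cal : compact_con al by exists [seq (h (p pr.1), h (p pr.2)) | pr <- s].
have Heq : conc_map e al = Cg (fun x y : L => List.In (x, y) s).
  apply: functional_extensionality => u; apply: functional_extensionality => v.
  apply: propositional_extensionality; split.
  - move=> H; apply (H _ (Cg_cong _ _)) => a b [a' [b' [Hab [-> ->]]]].
    apply (Hab _ (@pull_cong _ _ _ _ e _ He (Cg_cong _ _))) => a0 b0 Hin0; have [[u0 v0] [Hin E0]] := @In_map_inv _ _ (fun pr : L * L => (h (p pr.1), h (p pr.2))) _ _ Hin0; case: E0 => -> -> /=.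
    by rewrite !eK; apply Cg_gen.
  - move=> H; apply (H _ (Cg_cong _ _)) => a b Hin.
    apply Cg_gen; exists (h (p a)), (h (p b)); rewrite !eK; split => //.
    by apply Cg_gen; exact: (@In_map _ _ (fun pr : L * L => (h (p pr.1), h (p pr.2))) _ _ Hin).
have := Ee _ cal; rewrite Heq Hbe.
by case: (phi0 al).
Qed.
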